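(* Let $h\ge1$ and $m\ge1$ be integers. (a) Let $G$ be a finite Abelian group of order $v$ and $B=\{0,b_1,\dots,b_m\}\subseteq G$ a $B_h$ set (of cardinality $m+1$) that generates $G$. Then $\Lambda=\{\mathbf x\in\mathbb Z^m:\sum_{i=1}^m x_ib_i=0\}$ is a sublattice of $\mathbb Z^m$ with $d_a(\mathbf x,\mathbf y)>h$ for all distinct $\mathbf x,\mathbf y\in\Lambda$, and its density is $\mu(\Lambda)=1/v$. (b) Conversely, if $\Lambda'\subseteq\mathbb Z^m$ is a sublattice with $d_a(\mathbf x,\mathbf y)>h$ for all distinct $\mathbf x,\mathbf y\in\Lambda'$, then the quotient group $G=\mathbb Z^m/\Lambda'$ contains a $B_h$ set of cardinality $m+1$ that generates $G$.
   Context: A sublattice of $\mathbb Z^m$ is a subgroup of $(\mathbb Z^m,+)$. $d_a(\mathbf x,\mathbf y)=\max\{\sum_{i:x_i>y_i}(x_i-y_i),\sum_{i:x_i<y_i}(y_i-x_i)\}$. For an Abelian group $G$ (written additively), a set $B=\{b_0,\dots,b_m\}\subseteq G$ of $m+1$ elements is a $B_h$ set if the sums $b_{i_1}+\dots+b_{i_h}$, $0\le i_1\le\dots\le i_h\le m$, are pairwise different (for different index tuples). For $x_i\in\mathbb Z$, $x_ib_i$ denotes the $|x_i|$-fold sum of $b_i$ if $x_i\ge0$ and of $-b_i$ if $x_i<0$. The density of a lattice $\Lambda$ is $\mu(\Lambda)=\lim_{k\to\infty}|\Lambda\cap\{-k,\dots,k\}^m|/(2k+1)^m$. *)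

(* Defs.v *)
From HB Require Import structures.
From mathcomp Require Import all_boot all_order all_algebra.
Set Implicit Arguments. Unset Strict Implicit. Unset Printing Implicit Defensive.
Import Order.TTheory GRing.Theory Num.Theory.
Local Open Scope ring_scope.

Notation Zvec m := {ffun 'I_m -> int}.

Definition sublattice (m : nat) (L : Zvec m -> Prop) : Prop :=
  L 0 /\ (forall x y, L x -> L y -> L (x + y)) /\ (forall x, L x -> L (- x)).

Definition d_a (m : nat) (x y : Zvec m) : int :=
  Num.max (\sum_(i < m | y i < x i) (x i - y i))
          (\sum_(i < m | x i < y i) (y i - x i)).

Definition Bh_set (G : zmodType) (n h : nat) (b : 'I_n -> G) : Prop :=
  forall s t : h.-tuple 'I_n,
    sorted (fun i j : 'I_n => (i <= j)%N) s ->
    sorted (fun i j : 'I_n => (i <= j)%N) t ->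
    \sum_(i <- s) b i = \sum_(i <- t) b i -> s = t.

Definition generates (G : zmodType) (n : nat) (b : 'I_n -> G) : Prop :=
  forall g : G, exists c : 'I_n -> int, g = \sum_(i < n) b i *~ c i.

(* B = {0, b_1, ..., b_m}, indexed by 'I_m.+1 with b_0 = 0. *)
Definition extB (G : zmodType) (m : nat) (b : 'I_m -> G) : 'I_m.+1 -> G :=
  fun i => if unlift ord0 i is Some j then b j else 0.

Definition box_count (m : nat) (L : pred (Zvec m)) (k : nat) : nat :=
  #|[set x : {ffun 'I_m -> 'I_(2 * k + 1)} |
      L [ffun i => (nat_of_ord (x i))%:Z - k%:Z]]|.

Definition has_density (m : nat) (L : pred (Zvec m)) (d : rat) : Prop :=
  forall eps : rat, 0 < eps -> exists K : nat, forall k : nat, (K <= k)%N ->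
    `| (box_count L k)%:R / ((2 * k + 1) ^ m)%:R - d | < eps.

(* Main.v *)
Require Import Defs.
From HB Require Import structures.
From mathcomp Require Import all_boot all_order all_algebra.
From mathcomp Require Import zify ring lra.
Import Order.TTheory GRing.Theory Num.Theory.
Local Open Scope ring_scope.
Set Implicit Arguments. Unset Strict Implicit.

Lemma sum_extB (G : zmodType) (m : nat) (b : 'I_m -> G) (s : seq 'I_m.+1) :
  \sum_(j <- s) extB b j = \sum_(i < m) b i *+ count_mem (lift ord0 i) s.
Proof.
elim: s => [|x s IH]; first by rewrite big_nil big1 // => i _.
rewrite big_cons IH /= [RHS](eq_bigr (fun i => b i *+ (x == lift ord0 i) + b i *+ count_mem (lift ord0 i) s)); last by move=> i _; rewrite mulrnDr.
rewrite big_split /=; congr (_ + _).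
rewrite /extB; case: unliftP => [j ->|->].
  rewrite (bigD1 j) //= eqxx mulr1n big1 ?addr0 // => i /negbTE ij.
  by rewrite (inj_eq lift_inj) eq_sym ij.
by rewrite big1 // => i _; rewrite eq_sym (negbTE (neq_lift _ _)).
Qed.

Lemma size_counts (m : nat) (s : seq 'I_m.+1) :
  size s = (count_mem ord0 s + \sum_(i < m) count_mem (lift ord0 i) s)%N.
Proof.
elim: s => [|x s IH]; first by rewrite big1.
rewrite /= IH [in RHS](eq_bigr (fun i => (x == lift ord0 i) + count_mem (lift ord0 i) s)%N) //.
rewrite big_split /=.
case: (unliftP ord0 x) => [j ->|->].
  have E : (\sum_(i < m) (lift ord0 j == lift ord0 i))%N = 1%N.
    rewrite (bigD1 j) //= eqxx big1 // => i /negbTE ij.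
    by rewrite (inj_eq lift_inj) eq_sym ij.
  by rewrite E eq_sym (negbTE (neq_lift _ _)) /=; lia.
have E : (\sum_(i < m) (ord0 == lift ord0 i :> 'I_m.+1))%N = 0%N.
  by rewrite big1 // => i _; rewrite eq_sym (negbTE (neq_lift _ _)).
rewrite E eqxx /=; lia.
Qed.

Lemma counts_eq_tuple (h m : nat) (s t : h.-tuple 'I_m.+1) :
  sorted (fun i j : 'I_m.+1 => (i <= j)%N) s ->
  sorted (fun i j : 'I_m.+1 => (i <= j)%N) t ->
  (forall i : 'I_m, count_mem (lift ord0 i) s = count_mem (lift ord0 i) t) -> s = t.
Proof.
move=> ss st E; apply: val_inj => /=.
apply: (sorted_eq (leT := fun i j : 'I_m.+1 => (i <= j)%N)) => //.
- by move=> x y z; apply: leq_trans.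
- by move=> x y /anti_leq/val_inj.
apply/allP => x _ /=; apply/eqP.
case: (unliftP ord0 x) => [j ->|->]; first exact: E.
have := @size_counts _ s; have := @size_counts _ t; rewrite !size_tuple.
move=> H1 H2; rewrite (eq_bigr _ (fun (i : 'I_m) _ => E i)) in H2; exact: (addIn (etrans (esym H2) H1)).
Qed.

Lemma morph_facts (U V : zmodType) (f : U -> V) :
  (forall x y, f (x + y) = f x + f y) ->
  [/\ f 0 = 0, forall x, f (- x) = - f x & forall x n, f (x *~ n) = f x *~ n].
Proof.
move=> fD.
have f0 : f 0 = 0.
  have H := fD 0 0; rewrite addr0 in H.
  by apply: (addrI (f 0)); rewrite addr0 -H.
have fN : forall x, f (- x) = - f x.
  by move=> x; apply/eqP; rewrite -subr_eq0 opprK -fD addNr f0.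
have fMn : forall x k, f (x *+ k) = f x *+ k.
  by move=> x; elim=> [|k IH]; rewrite ?mulr0n // !mulrS fD IH.
split=> // x [k|k]; first exact: fMn.
by rewrite !NegzE !mulrNz fN; congr (- _); exact: fMn.
Qed.

Lemma sum_morph (U V : zmodType) (f : U -> V) (I : Type) (r : seq I) (F : I -> U) :
  (forall x y, f (x + y) = f x + f y) ->
  f (\sum_(i <- r) F i) = \sum_(i <- r) f (F i).
Proof.
move=> fD; have [f0 _ _] := morph_facts fD.
by apply: (big_morph f fD f0).
Qed.

Definition ev (m : nat) (i : 'I_m) : Zvec m := [ffun j => ((i == j) : nat)%:Z].

Lemma evE (m : nat) (i j : 'I_m) : ev i j = ((i == j) : nat)%:Z.
Proof. by rewrite ffunE. Qed.

Lemma vec_decomp (m : nat) (x : Zvec m) : x = \sum_(i < m) ev i *~ x i.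
Proof.
apply/ffunP => j; rewrite sum_ffunE (bigD1 j) //= big1 ?addr0.
  by rewrite ffunMzE ffunE eqxx intz.
by move=> i /negbTE ij; rewrite ffunMzE ffunE ij mul0rz.
Qed.

Lemma d_a_sub (m : nat) (x y : Zvec m) : d_a (x - y) 0 = d_a x y.
Proof.
rewrite /d_a; congr Num.max; apply: eq_big => i; rewrite !ffunE ?subr_gt0 ?subr_lt0 ?subr0 ?sub0r ?opprB //.
Qed.

Lemma sum_sub_le (m : nat) (x y : Zvec m) (P : pred 'I_m) :
  (forall i, 0 <= x i) -> (forall i, 0 <= y i) ->
  \sum_(i < m | P i) (x i - y i) <= \sum_i x i.
Proof.
move=> x0 y0.
apply: (@le_trans _ _ (\sum_(i < m | P i) x i)).
  by apply: ler_sum => i _; rewrite lerBlDr lerDl.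
rewrite [leRHS](bigID P) /= lerDl; exact: sumr_ge0.
Qed.

Lemma d_a_bound (m h : nat) (x y : Zvec m) :
  (forall i, 0 <= x i) -> (forall i, 0 <= y i) ->
  \sum_i x i <= h%:Z -> \sum_i y i <= h%:Z -> d_a x y <= h%:Z.
Proof.
move=> x0 y0 sx sy; rewrite /d_a ge_max; apply/andP; split.
  exact: le_trans (sum_sub_le _ x0 y0) sx.
exact: le_trans (sum_sub_le _ y0 x0) sy.
Qed.

Lemma partB (h m : nat) (hh : (1 <= h)%N) (L' : Zvec m -> Prop) : sublattice L' ->
     (forall x y, L' x -> L' y -> x <> y -> h%:Z < d_a x y) ->
     forall (G : zmodType) (phi : Zvec m -> G),
       (forall x y, phi (x + y) = phi x + phi y) ->
       (forall g : G, exists x, phi x = g) ->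
       (forall x, phi x = 0 <-> L' x) ->
       exists b : 'I_m.+1 -> G, injective b /\ Bh_set h b /\ generates b.
Proof.
move=> [L0 [LD LN]] dist G phi phiD phiS phiK.
have [f0 fN fMz] := morph_facts phiD.
have phiE : forall x, phi x = \sum_(i<m) phi (ev i) *~ x i.
  move=> x; rewrite {1}(vec_decomp x) sum_morph //.
  by apply: eq_bigr => i _; rewrite fMz.
pose b := fun i => phi (ev i).
have Ldist : forall x y : Zvec m, phi x = phi y -> x <> y -> h%:Z < d_a x y.
  move=> x y e nxy; rewrite -d_a_sub; apply: dist => //.
  - by apply/phiK; rewrite phiD fN e subrr.
  - by move=> /eqP; rewrite subr_eq0 => /eqP.
have ev_nn : forall i j : 'I_m, 0 <= ev i j by move=> i j; rewrite evE.
have ev_sum : forall i : 'I_m, \sum_j ev i j = 1.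
  move=> i; rewrite (bigD1 i) //= big1 ?addr0; first by rewrite evE eqxx.
  by move=> j /negbTE ij; rewrite evE eq_sym ij.
have z_nn : forall j : 'I_m, 0 <= (0 : Zvec m) j by move=> j; rewrite ffunE.
have z_sum : \sum_j (0 : Zvec m) j = 0 by rewrite big1 // => j _; rewrite ffunE.
have h1 : 1 <= h%:Z by rewrite lez_nat.
have evne : forall a a' : 'I_m, a != a' -> ev a <> ev a'.
  move=> a a' ne E; have := congr1 (fun f : Zvec m => f a) E.
  by rewrite !evE eqxx eq_sym (negbTE ne).
have ev0 : forall a : 'I_m, ev a <> 0.
  move=> a E; have := congr1 (fun f : Zvec m => f a) E.
  by rewrite evE ffunE eqxx.
exists (extB b); split; [|split].
- move=> i j; rewrite /extB; case: unliftP => [a ->|->]; case: unliftP => [a' ->|->] //.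
  + move=> e; case: (eqVneq a a') => [->//|ne]; exfalso.
    have := Ldist _ _ e (evne _ _ ne).
    by rewrite ltNge d_a_bound // ?ev_sum.
  + rewrite -f0 => e; exfalso; have := Ldist _ _ e (ev0 a).
    by rewrite ltNge d_a_bound // ?ev_sum ?z_sum.
  + rewrite -f0 => e; exfalso; have := Ldist _ _ (esym e) (ev0 a').
    by rewrite ltNge d_a_bound // ?ev_sum ?z_sum.
- move=> s t ss st e; apply: counts_eq_tuple => //.
  pose X := [ffun i => (count_mem (lift ord0 i) s)%:Z].
  pose Y := [ffun i => (count_mem (lift ord0 i) t)%:Z].
  have eX : \sum_(j <- s) extB b j = phi X.
    by rewrite sum_extB phiE; apply: eq_bigr => i _; rewrite ffunE pmulrn.
  have eY : \sum_(j <- t) extB b j = phi Y.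
    by rewrite sum_extB phiE; apply: eq_bigr => i _; rewrite ffunE pmulrn.
  have sX : \sum_i X i <= h%:Z.
    rewrite (eq_bigr (fun i => (count_mem (lift ord0 i) s)%:Z)); last by move=> i _; rewrite ffunE.
    rewrite -(big_morph Posz PoszD (erefl _)) lez_nat.
    have := @size_counts _ s; rewrite size_tuple.
    by move=> HH; rewrite [X in (_ <= X)%N]HH; exact: leq_addl.
  have sY : \sum_i Y i <= h%:Z.
    rewrite (eq_bigr (fun i => (count_mem (lift ord0 i) t)%:Z)); last by move=> i _; rewrite ffunE.
    rewrite -(big_morph Posz PoszD (erefl _)) lez_nat.
    have := @size_counts _ t; rewrite size_tuple.
    by move=> HH; rewrite [X in (_ <= X)%N]HH; exact: leq_addl.
  case: (eqVneq X Y) => [XY | ne].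
    by move=> i; have := congr1 (fun f : Zvec m => f i) XY; rewrite !ffunE => -[].
  exfalso; have := Ldist X Y (etrans (esym eX) (etrans e eY)) (fun E => (negP ne) (introT eqP E)).
  by rewrite ltNge d_a_bound // => i; rewrite ffunE.
- move=> g; have [x <-] := phiS g.
  exists (fun j => if unlift ord0 j is Some i then x i else 0).
  rewrite big_ord_recl /extB unlift_none mul0rz add0r phiE.
  by apply: eq_bigr => i _; rewrite liftK.
Qed.

Definition Sq (h m : nat) (c : 'I_m -> nat) : seq 'I_m.+1 :=
  nseq (h - \sum_i c i) ord0 ++ flatten [seq nseq (c i) (lift ord0 i) | i <- index_enum 'I_m].

Lemma Sq_count (h m : nat) (c : 'I_m -> nat) j :
  count_mem (lift ord0 j) (Sq h c) = c j.
Proof.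
rewrite /Sq count_cat count_nseq /= mul0n add0n.
rewrite count_flatten sumnE !big_map /= (bigD1 j) //= count_nseq /= eqxx mul1n.
rewrite big1 ?addn0 // => i /negbTE ij; rewrite count_nseq /= (inj_eq lift_inj) ij.
by rewrite mul0n.
Qed.

Lemma Sq_size (h m : nat) (c : 'I_m -> nat) :
  (\sum_i c i <= h)%N -> size (Sq h c) = h.
Proof.
move=> hc; rewrite /Sq size_cat size_nseq size_flatten /shape -map_comp sumnE !big_map /=.
rewrite [X in (_ + X)%N](eq_bigr c) => [|i _]; [exact: subnK | exact: size_nseq].
Qed.

Lemma partA_dist (G : zmodType) (h m : nat) (b : 'I_m -> G) :
  Bh_set h (extB b) -> forall x y : Zvec m,
  \sum_(i < m) b i *~ x i == 0 -> \sum_(i < m) b i *~ y i == 0 -> x <> y ->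
  h%:Z < d_a x y.
Proof.
move=> Bh x y /eqP Lx /eqP Ly nxy; rewrite ltNge; apply/negP => dle.
pose p i := if y i < x i then absz (x i - y i) else 0%N.
pose q i := if x i < y i then absz (y i - x i) else 0%N.
have pq : forall i, (p i)%:Z - (q i)%:Z = x i - y i.
  move=> i; rewrite /p /q; case: ltgtP => H.
  - by rewrite subr0 abszE ger0_norm // subr_ge0 ltW.
  - by rewrite sub0r abszE ger0_norm ?opprB // subr_ge0 ltW.
  - by rewrite H !subrr.
have sp : (\sum_i p i <= h)%N.
  rewrite -lez_nat; apply: le_trans dle; rewrite /d_a le_max; apply/orP; left.
  rewrite (big_morph Posz PoszD (erefl _)) [leRHS]big_mkcond /=; apply: ler_sum => i _.
  by rewrite /p; case: ifP => H //; rewrite abszE ger0_norm // subr_ge0 ltW.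
have sq : (\sum_i q i <= h)%N.
  rewrite -lez_nat; apply: le_trans dle; rewrite /d_a le_max; apply/orP; right.
  rewrite (big_morph Posz PoszD (erefl _)) [leRHS]big_mkcond /=; apply: ler_sum => i _.
  by rewrite /q; case: ifP => H //; rewrite abszE ger0_norm // subr_ge0 ltW.
have Hs : size (sort (fun i j : 'I_m.+1 => (i <= j)%N) (Sq h p)) == h.
  by rewrite size_sort Sq_size.
have Ht : size (sort (fun i j : 'I_m.+1 => (i <= j)%N) (Sq h q)) == h.
  by rewrite size_sort Sq_size.
have tot : total (fun i j : 'I_m.+1 => (i <= j)%N) by move=> i j; exact: leq_total.
have cnt : forall c i, count_mem (lift ord0 i) (sort (fun i j : 'I_m.+1 => (i <= j)%N) (Sq h c)) = c i.
  by move=> c i; rewrite (permP (permEl (perm_sort _ _))) Sq_count.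
have E : Tuple Hs = Tuple Ht.
  apply: Bh; [exact: sort_sorted tot _ | exact: sort_sorted tot _ |].
  rewrite !sum_extB (eq_bigr (fun i => b i *+ p i)); last by move=> i _; rewrite cnt.
  rewrite [RHS](eq_bigr (fun i => b i *+ q i)); last by move=> i _; rewrite cnt.
  apply/eqP; rewrite -subr_eq0 -sumrB.
  rewrite (eq_bigr (fun i => b i *~ x i - b i *~ y i)); first by rewrite sumrB Lx Ly subrr.
  by move=> i _; rewrite !pmulrn -!mulrzBr pq.
apply: nxy; apply/ffunP => i.
have epq : p i = q i.
  rewrite -(cnt p i) -(cnt q i).
  exact: (congr1 (fun s : h.-tuple _ => count_mem (lift ord0 i) (tval s)) E).
have := pq i; rewrite epq subrr => /eqP; rewrite eq_sym subr_eq0 => /eqP //.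
Qed.

Lemma pow_diff (b d n : nat) : ((b + d)^n.+1 <= b^n.+1 + n.+1 * d * (b+d)^n)%N.
Proof.
elim: n => [|n IH]; first by rewrite !expn1 expn0 muln1 mul1n.
rewrite (expnS b n.+1) (expnS (b + d) n.+1).
set A := ((b + d) ^ n.+1)%N; set Bn := (b ^ n.+1)%N.
have eA : A = ((b + d) * (b + d) ^ n)%N by rewrite /A expnS.
have h1 : (b * A <= b * Bn + n.+1 * d * (b * (b+d)^n))%N.
  have := leq_mul (leqnn b) IH; rewrite -/A -/Bn; lia.
have h2 : (b * (b+d)^n <= A)%N by rewrite eA leq_mul2r leq_addr orbT.
have h3 : (n.+1 * d * (b * (b+d)^n) <= n.+1 * d * A)%N by rewrite leq_mul2l h2 orbT.
lia.
Qed.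

Lemma dens_arith (v m C : nat) (f : nat -> nat) : (0 < v)%N -> (0 < m)%N ->
  (forall k, (C <= k)%N -> ((2*(k-C)+1)^m <= v * f k)%N /\ (v * f k <= (2*(k+C)+1)^m)%N) ->
  forall eps : rat, 0 < eps -> exists K : nat, forall k, (K <= k)%N ->
    `|(f k)%:R / ((2*k+1)^m)%:R - (v%:R)^-1| < eps.
Proof.
move=> v0; case: m => [//|m'] _ Hb eps eps0.
pose D := (m'.+1 * (2 * C) * 2 ^ m')%N.
have [B0 BP] : 0 <= D%:R / eps /\ D%:R / eps < (Num.bound (D%:R / eps))%:R.
  split; first by rewrite divr_ge0 // ltW.
  by apply: archi_boundP; rewrite divr_ge0 // ltW.
exists (maxn C (Num.bound (D%:R / eps))) => k; rewrite geq_max => /andP [kC kB].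
have [lo hi] := Hb k kC.
set N := (2 * k + 1)%N.
have kCN : (2 * k - 2 * (k - C) = 2 * C)%N by lia.
have expmono : forall x y n, (x <= y)%N -> (x ^ n <= y ^ n)%N.
  by move=> x y n xy; elim: n => // n IH; rewrite !expnS leq_mul.
have eD : forall Q, (D * Q = m'.+1 * (2 * C) * (2 ^ m' * Q))%N.
  by move=> Q; rewrite /D !mulnA.
have up : (v * f k <= N ^ m'.+1 + D * N ^ m')%N.
  have := pow_diff N (2 * C)%N m'.
  have -> : (N + 2 * C = 2 * (k + C) + 1)%N by rewrite /N; lia.
  have a2 : ((2 * (k + C) + 1) ^ m' <= 2 ^ m' * N ^ m')%N.
    by rewrite -expnMn expmono // /N; lia.
  have a3 := leq_mul (leqnn (m'.+1 * (2 * C))) a2.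
  rewrite eD; lia.
have lw : (N ^ m'.+1 <= v * f k + D * N ^ m')%N.
  have := pow_diff (2 * (k - C) + 1)%N (2 * C)%N m'.
  have -> : (2 * (k - C) + 1 + 2 * C = N)%N by rewrite /N; lia.
  have a2 : (N ^ m' <= 2 ^ m' * N ^ m')%N.
    by rewrite -{1}(mul1n (N ^ m')%N) leq_mul2r expn_gt0 orbT.
  have a3 := leq_mul (leqnn (m'.+1 * (2 * C))) a2.
  rewrite eD; lia.
have Npos : (0 < N)%N by rewrite /N addn1.
have NB : D%:R < eps * N%:R.
  rewrite -ltr_pdivrMl // mulrC; apply: (lt_le_trans BP); rewrite ler_nat /N; lia.
rewrite natrX.
set a : rat := v%:R; set F : rat := (f k)%:R; set n : rat := N%:R; set W : rat := n ^+ m'.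
have a1 : 1 <= a by rewrite /a ler1n.
have n0 : 0 < n by rewrite /n ltr0n.
have W0 : 0 < W by rewrite /W exprn_gt0.
have eN : n ^+ m'.+1 = n * W by rewrite exprS.
have hup : a * F <= n * W + D%:R * W.
  by rewrite /a /F /W /n -!natrX -!natrM -natrD ler_nat -expnS.
have hlw : n * W <= a * F + D%:R * W.
  by rewrite /a /F /W /n -!natrX -!natrM -natrD ler_nat -expnS.
have DW : D%:R * W < eps * n * W by rewrite ltr_pM2r.
have eW : eps * n * W <= eps * n * W * a.
  by rewrite ler_peMr // ltW // !mulr_gt0.
have -> : F / n ^+ m'.+1 - a^-1 = (a * F - n * W) / (a * (n * W)).
  rewrite eN; field; rewrite -/n -/a; apply/and3P; split; apply: lt0r_neq0 => //; exact: lt_le_trans a1.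
have aW : 0 < a * (n * W) by rewrite !mulr_gt0 // (lt_le_trans _ a1).
rewrite ltr_norml ltr_pdivrMr // ltr_pdivlMr //; apply/andP; split; nra.
Qed.

Lemma cnt_shift (m k c : nat) (y : Zvec m) (P Q : pred (Zvec m)) :
  (forall i, `|y i| <= c%:Z) -> (forall z, P z -> Q (z + y)) ->
  (box_count P k <= box_count Q (k + c))%N.
Proof.
move=> hy PQ.
have Hb : forall (j : 'I_(2 * k + 1)) i, (absz ((j : nat)%:Z + c%:Z + y i)%R < 2 * (k + c) + 1)%N.
  move=> j i; have := ltn_ord j; have := hy i; rewrite ler_norml => /andP [y1 y2] jk.
  lia.
pose F (x : {ffun 'I_m -> 'I_(2 * k + 1)}) : {ffun 'I_m -> 'I_(2 * (k + c) + 1)} :=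
  [ffun i => Ordinal (Hb (x i) i)].
have nn : forall (j : 'I_(2 * k + 1)) i, 0 <= (j : nat)%:Z + c%:Z + y i.
  move=> j i; have := hy i; rewrite ler_norml => /andP [y1 y2]; lia.
have Finj : injective F.
  move=> x1 x2 E; apply/ffunP => i; apply: val_inj.
  have := congr1 (fun f : {ffun 'I_m -> 'I_(2 * (k + c) + 1)} => (f i : nat)%:Z) E; rewrite !ffunE /= !abszE !ger0_norm //.
  lia.
rewrite /box_count -(card_imset _ Finj); apply: subset_leq_card.
apply/subsetP => _ /imsetP [x Hx ->]; rewrite inE in Hx; rewrite inE.
have -> : [ffun i => ((F x i : nat)%:Z - (k + c)%:Z)] = [ffun i => (x i : nat)%:Z - k%:Z] + y.
  apply/ffunP => i; rewrite !ffunE /= abszE ger0_norm //; lia.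
exact: PQ.
Qed.

Lemma fibre_sum (G : finType) (m k : nat) (f : Zvec m -> G) :
  (\sum_(g : G) box_count (fun z => f z == g) k)%N = ((2 * k + 1) ^ m)%N.
Proof.
rewrite /box_count.
have -> : ((2 * k + 1) ^ m)%N = #|{ffun 'I_m -> 'I_(2 * k + 1)}| by rewrite card_ffun !card_ord.
rewrite -sum1_card (partition_big (fun x : {ffun 'I_m -> 'I_(2 * k + 1)} => f [ffun i => (x i : nat)%:Z - k%:Z]) predT) //=.
apply: eq_bigr => g _; rewrite -sum1_card; apply: eq_bigl => x; rewrite inE.
by [].
Qed.

Lemma partA_dens (G : finZmodType) (m : nat) (hm : (0 < m)%N) (b : 'I_m -> G) :
  generates (extB b) ->
  has_density (fun x : Zvec m => \sum_(i < m) b i *~ x i == 0) (#|G|%:R)^-1.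
Proof.
move=> Hgen.
pose phi (x : Zvec m) := \sum_(i < m) b i *~ x i.
have phiD : forall x y, phi (x + y) = phi x + phi y.
  by move=> x y; rewrite /phi -big_split; apply: eq_bigr => i _; rewrite ffunE mulrzDr.
have [_ phiN _] := morph_facts phiD.
have gen : forall g, exists x : Zvec m, phi x = g.
  move=> g; have [c ->] := Hgen g; exists [ffun i => c (lift ord0 i)].
  rewrite /phi big_ord_recl /extB unlift_none mul0rz add0r.
  by apply: eq_bigr => i _; rewrite liftK ffunE.
have [Y HY] := fin_all_exists gen.
pose C := (\max_(g : G) \max_(i < m) absz (Y g i))%N.
have YC : forall g i, `|Y g i| <= C%:Z.
  move=> g i; rewrite -abszE lez_nat.
  apply: leq_trans (@leq_bigmax _ (fun i => absz (Y g i)) i) _.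
  exact: (@leq_bigmax _ (fun g => \max_(i < m) absz (Y g i)) g).
have YCn : forall g i, `|(- Y g) i| <= C%:Z by move=> g i; rewrite ffunE normrN.
have v0 : (0 < #|G|)%N by apply/card_gt0P; exists 0.
apply: (dens_arith (C := C)) => // k kC; split.
- rewrite -(fibre_sum (k - C)%N phi).
  apply: (@leq_trans (\sum_(g : G) box_count (fun z => phi z == 0%R) (k - C + C))%N).
    apply: leq_sum => g _; apply: cnt_shift (YCn g) _ => z /eqP Hz.
    by rewrite phiD phiN HY Hz subrr.
  by rewrite subnK // sum_nat_const.
- rewrite -(fibre_sum (k + C)%N phi).
  apply: (@leq_trans (\sum_(g : G) box_count (fun z => phi z == 0%R) k)%N).
    by rewrite sum_nat_const.
  apply: leq_sum => g _; apply: cnt_shift (YC g) _ => z /eqP Hz.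
  by rewrite phiD HY Hz add0r.
Qed.

Unset Implicit Arguments.

Theorem mainTheorem8 (h m : nat) (hh : (1 <= h)%N) (hm : (1 <= m)%N) :
  (* (a) *)
  (forall (G : finZmodType) (b : 'I_m -> G),
     injective (extB b) -> Bh_set h (extB b) -> generates (extB b) ->
     let Lam : pred (Zvec m) := fun x => \sum_(i < m) b i *~ x i == 0 in
     sublattice (fun x => Lam x)
     /\ (forall x y, Lam x -> Lam y -> x <> y -> h%:Z < d_a x y)
     /\ has_density Lam (#|G|%:R)^-1)
  /\
  (* (b) : G together with a surjective homomorphism phi with kernel L'
     is (up to isomorphism) the quotient group Z^m / L' *)
  (forall (L' : Zvec m -> Prop), sublattice L' ->
     (forall x y, L' x -> L' y -> x <> y -> h%:Z < d_a x y) ->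
     forall (G : zmodType) (phi : Zvec m -> G),
       (forall x y, phi (x + y) = phi x + phi y) ->
       (forall g : G, exists x, phi x = g) ->
       (forall x, phi x = 0 <-> L' x) ->
       exists b : 'I_m.+1 -> G, injective b /\ Bh_set h b /\ generates b).
Proof.
split.
- move=> G b binj Bh gen Lam; split; [|split].
  + split; [|split].
    * by rewrite /Lam big1 // => i _; rewrite ffunE mulr0z.
    * move=> x y; rewrite /Lam => /eqP Hx /eqP Hy; apply/eqP.
      rewrite (eq_bigr (fun i => b i *~ x i + b i *~ y i)).
        by rewrite big_split /= Hx Hy addr0.
      by move=> i _; rewrite ffunE mulrzDr.
    * move=> x; rewrite /Lam => /eqP Hx; apply/eqP.
      rewrite (eq_bigr (fun i => - (b i *~ x i))).
        by rewrite sumrN Hx oppr0.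
      by move=> i _; rewrite ffunE mulrNz.
  + exact: partA_dist.
  + exact: partA_dens.
- move=> L' sl dist G phi phiD phiS phiK.
  exact: (partB hh sl dist phiD phiS phiK).
Qed.
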